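(* Fix $\epsilon>0$, integers $2\le k\le n$, terminals $T=\{s_1,\dots,s_k\}\subseteq[n]$, and a cost function $c$. Let $\hat x^*$ be the output of the mechanism that samples independent $Z_{\{t,u\}}\sim\mathsf{Lap}(\sqrt2k/\epsilon)$ for every $t\in T$, $u\in[n]\setminus T$ and returns an optimal solution of $$\min_{x}\ \sum_{\{u,v\},u\neq v}c(u,v)\|x_u-x_v\|_1+\sum_{t\in T}\sum_{u\in[n]\setminus T}Z_{\{t,u\}}\|x_t-x_u\|_1\quad\text{s.t. } x_{s_i}=\mathbf{e}_i\ (i\in[k]),\ x_u\in\Delta_k\ (u\in[n]).$$ Then $\mathbb{E}[\mathcal{E}(\hat x^* )]-\mathsf{OPT}(c,n,k)\le O\!\left(\frac{nk\log k}{\epsilon}\right)$, and with high probability $\mathcal{E}(\hat x^* )-\mathsf{OPT}(c,n,k)\le O\!\left(\frac{nk\log(nk)}{\epsilon}\right)$.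
   Context: $\Delta_k=\{x\in\mathbb{R}^k_{\ge0}:\sum_{i}x^{(i)}=1\}$; $\mathbf{e}_i$ is the $i$-th standard basis vector. A cost function is a symmetric $c:[n]\times[n]\to\mathbb{R}_{\ge0}$. For $x\in(\Delta_k)^n$, $\mathcal{E}(x)=\sum_{\{u,v\},u\ne v}c(u,v)\|x_u-x_v\|_1$, and $\mathsf{OPT}(c,n,k)$ is the minimum of $\mathcal{E}(x)$ over $x\in(\Delta_k)^n$ with $x_{s_i}=\mathbf{e}_i$ for all $i$. $\mathsf{Lap}(b)$ is the Laplace distribution with density $\frac1{2b}e^{-|x|/b}$. *)

(* Defs.v *)
From HB Require Import structures.
From mathcomp Require Import all_boot all_order all_algebra.
From mathcomp Require Import all_classical all_reals all_analysis.
Set Implicit Arguments. Unset Strict Implicit. Unset Printing Implicit Defensive.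
Import Order.TTheory GRing.Theory Num.Theory.
Local Open Scope classical_set_scope.
Local Open Scope ring_scope.

Section Defs.
Variable R : realType.

Definition ebasis (k : nat) (i : 'I_k) : 'I_k -> R :=
  fun j => if j == i then 1 else 0.

Definition in_simplex (k : nat) (y : 'I_k -> R) : Prop :=
  (forall j, 0 <= y j) /\ \sum_(j < k) y j = 1.

Definition l1dist (k : nat) (y z : 'I_k -> R) : R :=
  \sum_(j < k) `|y j - z j|.

Definition cost_fun (n : nat) (c : 'I_n -> 'I_n -> R) : Prop :=
  (forall u v, c u v = c v u) /\ (forall u v, 0 <= c u v).

Definition energy (n k : nat) (c : 'I_n -> 'I_n -> R)
    (x : 'I_n -> 'I_k -> R) : R :=
  \sum_(u < n) \sum_(v < n | (u < v)%N) c u v * l1dist (x u) (x v).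

Definition feasible (n k : nat) (s : 'I_k -> 'I_n)
    (x : 'I_n -> 'I_k -> R) : Prop :=
  (forall u, in_simplex (x u)) /\ (forall i, x (s i) = ebasis i).

Definition OPT (n k : nat) (c : 'I_n -> 'I_n -> R) (s : 'I_k -> 'I_n) : R :=
  inf [set energy c x | x in [set x | feasible s x]].

(* the noisy objective; noise z i u = Z_{s_i, u}, used only for u outside T *)
Definition noisy_obj (n k : nat) (c : 'I_n -> 'I_n -> R) (s : 'I_k -> 'I_n)
    (z : 'I_k -> 'I_n -> R) (x : 'I_n -> 'I_k -> R) : R :=
  energy c x +
  \sum_(i < k) \sum_(u < n | u \notin codom s) z i u * l1dist (x (s i)) (x u).

Definition is_noisy_opt (n k : nat) (c : 'I_n -> 'I_n -> R)
    (s : 'I_k -> 'I_n) (z : 'I_k -> 'I_n -> R) (x : 'I_n -> 'I_k -> R) : Prop :=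
  feasible s x /\
  forall y, feasible s y -> noisy_obj c s z x <= noisy_obj c s z y.

Definition laplace_pdf (b : R) (t : R) : R := (2 * b)^-1 * expR (- `|t| / b).

End Defs.

Section Prob.
Context {R : realType} {d : measure_display} {Omega : measurableType d}.

Definition is_laplace (P : probability Omega R) (X : Omega -> R) (b : R) : Prop :=
  measurable_fun setT X /\
  forall A : set R, measurable A ->
    P (X @^-1` A) = (\int[lebesgue_measure]_(t in A) (laplace_pdf b t)%:E)%E.

Definition mutually_independent (I : finType) (Q : pred I)
    (P : probability Omega R) (X : I -> Omega -> R) : Prop :=
  forall B : I -> set R, (forall i, measurable (B i)) ->
    P (\bigcap_(i in [set i | Q i]) (X i @^-1` B i)) =
    (\prod_(i | Q i) P (X i @^-1` B i))%E.
End Prob.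

(* Main.v *)
Require Import Defs.
From HB Require Import structures.
From mathcomp Require Import all_boot all_order all_algebra.
From mathcomp Require Import all_classical all_reals all_analysis.
From mathcomp Require Import measurable_realfun ftc exponential_distribution random_variable probability.
From mathcomp Require Import ring lra.
Import Order.TTheory GRing.Theory Num.Def Num.Theory.
Import numFieldTopology.Exports numFieldNormedType.Exports.
Local Open Scope classical_set_scope.
Local Open Scope ring_scope.
Section Det.
Variable R : realType.

Lemma simplex_le1 k (y : 'I_k -> R) i : in_simplex y -> y i <= 1.
Proof.
move=> [y0 ys]; rewrite -ys (bigD1 i) //= lerDl.
by apply: sumr_ge0 => j _; exact: y0.
Qed.

Lemma l1_ebasis k (i : 'I_k) (y : 'I_k -> R) :
  in_simplex y -> l1dist (ebasis R i) y = 2 - 2 * y i.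
Proof.
move=> hy; have [y0 ys] := hy.
rewrite /l1dist (bigD1 i) //= /ebasis eqxx.
rewrite (eq_bigr (fun j => y j)); last first.
  by move=> j /negbTE ->; rewrite sub0r normrN ger0_norm.
have : \sum_(j < k | j != i) y j = 1 - y i.
  by move: ys; rewrite (bigD1 i) //= => ys'; rewrite -ys'; ring.
move=> ->; rewrite ger0_norm ?subr_ge0 ?simplex_le1 //.
by rewrite mulr2n mulrDl mul1r opprD addrACA.
Qed.

Definition Yf (t z : R) := Num.max (`|z| - t) 0.

Lemma Yf_ge0 t z : 0 <= Yf t z.
Proof. by rewrite /Yf le_max lexx orbT. Qed.

Lemma absz_le t z : `|z| <= t + Yf t z.
Proof. by rewrite /Yf -lerBlDl le_max lexx. Qed.

Lemma half_ineq k (z : 'I_k -> R) (x : 'I_k -> R) t :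
  in_simplex x -> 0 <= t ->
  \sum_i z i * x i <= t + \sum_i Yf t (z i).
Proof.
move=> hx t0; have [x0 xs] := hx.
apply: (@le_trans _ _ (\sum_i (t + Yf t (z i)) * x i)).
  apply: ler_sum => i _; apply: ler_wpM2r; first exact: x0.
  exact: le_trans (ler_norm _) (absz_le _ _).
rewrite (eq_bigr (fun i => t * x i + Yf t (z i) * x i)); last by move=> i _; rewrite mulrDl.
rewrite big_split /= -mulr_sumr xs mulr1 lerD2l.
apply: ler_sum => i _; rewrite -[leRHS]mulr1; apply: ler_wpM2l.
  exact: Yf_ge0.
exact: simplex_le1.
Qed.

Lemma key_ineq k (z : 'I_k -> R) (x y : 'I_k -> R) t :
  in_simplex x -> in_simplex y -> 0 <= t ->
  \sum_i z i * (x i - y i) <= 2 * (t + \sum_i Yf t (z i)).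
Proof.
move=> hx hy t0.
have e : \sum_i z i * (x i - y i) =
   \sum_i z i * x i + \sum_i (- z i) * y i.
  by rewrite -big_split /=; apply: eq_bigr => i _; rewrite mulrBr mulNr.
have h1 := @half_ineq k z x t hx t0; have h2 := @half_ineq k (fun i => - z i) y t hy t0.
have e2 : \sum_i Yf t (- z i) = \sum_i Yf t (z i).
  by apply: eq_bigr => i _; rewrite /Yf normrN.
rewrite e2 in h2; rewrite e; lra.
Qed.

Lemma noisy_diff n k (c : 'I_n -> 'I_n -> R) (s : 'I_k -> 'I_n)
  (z : 'I_k -> 'I_n -> R) (x y : 'I_n -> 'I_k -> R) t :
  feasible s x -> feasible s y -> 0 <= t ->
  noisy_obj c s z y - noisy_obj c s z x - (energy c y - energy c x) <=
  4 * (n%:R * t + \sum_(u < n | u \notin codom s) \sum_i Yf t (z i u)).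
Proof.
move=> [xs xe] [ys ye] t0.
set Bnd := (X in _ <= X).
suff h : \sum_(i < k) \sum_(u < n | u \notin codom s) z i u * l1dist (y (s i)) (y u) -
   \sum_(i < k) \sum_(u < n | u \notin codom s) z i u * l1dist (x (s i)) (x u) <= Bnd.
  by rewrite /noisy_obj; lra.
rewrite -sumrB.
have e : \sum_(i < k) (\sum_(u < n | u \notin codom s) z i u * l1dist (y (s i)) (y u) -
     \sum_(u < n | u \notin codom s) z i u * l1dist (x (s i)) (x u)) =
   2 * \sum_(u < n | u \notin codom s) \sum_(i < k) z i u * (x u i - y u i).
  rewrite (eq_bigr (fun i => \sum_(u < n | u \notin codom s) (z i u * l1dist (y (s i)) (y u) -
          z i u * l1dist (x (s i)) (x u)))); last by move=> i _; rewrite sumrB.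
  rewrite exchange_big /= mulr_sumr; apply: eq_bigr => u _; rewrite mulr_sumr.
  apply: eq_bigr => i _; rewrite ye xe !l1_ebasis //; ring.
rewrite e.
apply: (@le_trans _ _ (2 * \sum_(u < n | u \notin codom s) (2 * (t + \sum_i Yf t (z i u))))).
  by apply: ler_wpM2l => //; apply: ler_sum => u _; exact: key_ineq.
rewrite -mulr_sumr mulrA (_ : 2 * 2 = 4 :> R); last by rewrite -natrM.
apply: ler_wpM2l => //; rewrite big_split /= lerD2r.
apply: (@le_trans _ _ (\sum_(u < n) t)); last by rewrite sumr_const card_ord mulr_natl.
rewrite [leRHS](bigID (fun u => u \notin codom s)) /= lerDl.
by apply: sumr_ge0.
Qed.

End Det.
Arguments Yf {R}.
Section Det2.
Variable R : realType.
Lemma dev_bound n k (c : 'I_n -> 'I_n -> R) (s : 'I_k -> 'I_n)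
  (z : 'I_k -> 'I_n -> R) (x : 'I_n -> 'I_k -> R) t :
  is_noisy_opt c s z x -> 0 <= t ->
  energy c x - OPT c s <=
  4 * (n%:R * t + \sum_(u < n | u \notin codom s) \sum_i Yf t (z i u)).
Proof.
move=> [fx opt] t0; set B := (X in _ <= X).
suff : energy c x - B <= OPT c s by lra.
apply: lb_le_inf; first by exists (energy c x); exists x.
move=> e [y fy <-].
have h1 := opt y fy.
have h2 := @noisy_diff R n k c s z x y t fx fy t0.
rewrite -/B in h2; lra.
Qed.
End Det2.
Section Lap.
Variable R : realType.
Local Notation mu := (@lebesgue_measure R).

Lemma laplace_pdf_ge0 (b t : R) : 0 < b -> 0 <= laplace_pdf b t.
Proof. by move=> b0; rewrite /laplace_pdf mulr_ge0 ?expR_ge0 // invr_ge0 mulr_ge0 // ltW. Qed.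

Lemma laplace_pdf_cont (b : R) : continuous (laplace_pdf b).
Proof.
move=> x; rewrite /laplace_pdf.
apply: (@continuousM _ R^o (fun=> (2 * b)^-1) (fun x => expR (- `|x| / b))).
  exact: cst_continuous.
apply: continuous_comp; last exact: continuous_expR.
apply: (@continuousM _ R^o (fun x => - `|x|) (fun=> b^-1)); last exact: cst_continuous.
apply: (@continuousN _ R^o); exact: norm_continuous.
Qed.

Lemma laplace_pdf_meas (b : R) : measurable_fun setT (laplace_pdf b).
Proof. exact: measurable_realfun.continuous_measurable_fun (laplace_pdf_cont b). Qed.

Lemma laplace_int0a (b a : R) : 0 < b -> 0 < a ->
  (\int[mu]_(x in `[0%R, a]) (laplace_pdf b x)%:E =
   (2^-1 * (1 - expR (- a / b)))%:E)%E.
Proof.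
move=> b0 a0.
transitivity (\int[mu]_(x in `[0%R, a]) ((2^-1)%:E * (exponential_pdf b^-1 x)%:E))%E.
  apply: eq_integral => x; rewrite inE /= in_itv /= => /andP[x0 _].
  rewrite -EFinM exponential_pdfE // /laplace_pdf ger0_norm //.
  congr EFin; rewrite invfM mulrA; congr (_ * expR _).
  by rewrite !mulNr mulrC.
have mE : measurable_fun `[0%R, a] (fun x => (exponential_pdf b^-1 x)%:E).
  apply/measurable_EFinP; apply: measurable_funTS.
  exact: measurable_exponential_pdf.
rewrite ge0_integralZl //; last first.
  by move=> x _; rewrite lee_fin exponential_pdf_ge0 // invr_ge0 ltW.
have := @exponential_prob_itv0c R b^-1 a a0; rewrite /exponential_prob => ->.
by rewrite -EFinB -EFinM !mulNr [b^-1 * a]mulrC.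
Qed.

End Lap.
Section Lap2.
Variable R : realType.
Local Notation mu := (@lebesgue_measure R).

Lemma laplace_int_sym (b a : R) : 0 < b -> 0 < a ->
  (\int[mu]_(x in `[(- a)%R, a]) (laplace_pdf b x)%:E =
   (1 - expR (- a / b))%:E)%E.
Proof.
move=> b0 a0.
have mf : forall D, measurable_fun D (fun x => (laplace_pdf b x)%:E).
  move=> D; apply/measurable_EFinP; apply: measurable_funTS.
  exact: laplace_pdf_meas.
have U : `[(- a)%R, a]%classic = `[(- a)%R, 0%R]%classic `|` `]0%R, a]%classic.
  apply/seteqP; split => x /=; rewrite !in_itv /=.
    move=> /andP[h1 h2]; have [x0|x0] := leP x 0.
      by left; rewrite h1.
    by right; rewrite h2.
  move=> [/andP[h1 h2]|/andP[h1 h2]]; apply/andP; split => //.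
  - exact: le_trans h2 (ltW a0).
  - by apply: le_trans (ltW h1); rewrite lerNl oppr0 ltW.
have dj : [disjoint `[(- a)%R, 0%R]%classic & `]0%R, a]%classic].
  apply/disj_setPS => x [] /=; rewrite !in_itv /= => /andP[_ h1] /andP[h2 _].
  by move: (lt_le_trans h2 h1); rewrite ltxx.
rewrite U ge0_integral_setU //=; last 2 first.
  exact: mf.
  by move=> x _; rewrite lee_fin laplace_pdf_ge0.
rewrite integral_itv_obnd_cbnd; last exact: mf.
have := @integration_by_substitution_oppr R (laplace_pdf b) 0 a (ltW a0).
rewrite oppr0 => ->; last first.
  by apply: continuous_subspaceT => x; exact: laplace_pdf_cont.
under eq_integral => x _ do rewrite /= /laplace_pdf normrN.
rewrite laplace_int0a // -EFinD; by congr EFin; field.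
Qed.

Lemma laplace_tail d (Omega : measurableType d) (P : probability Omega R)
  (X : Omega -> R) (b a : R) : 0 < b -> 0 < a -> is_laplace P X b ->
  P [set w | a < `|X w|] = (expR (- a / b))%:E.
Proof.
move=> b0 a0 [mX hX].
have mI : measurable (`[(- a)%R, a]%classic : set R) by [].
have e : [set w | a < `|X w|] = ~` (X @^-1` `[(- a)%R, a]).
  apply/seteqP; split => w /=; rewrite in_itv /=.
    by move=> h /andP[h1 h2]; move: h; rewrite ltNge ler_norml h1 h2.
  by move=> h; rewrite ltNge ler_norml; apply/negP.
rewrite e probability_setC; last first.
  by rewrite -(setTI (X @^-1` _)); exact: mX.
rewrite hX // laplace_int_sym // -EFinB; congr EFin; ring.
Qed.
End Lap2.
Section Ex.
Variable R : realType.
Local Notation mu := (@lebesgue_measure R).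

Lemma Yf_meas d (Omega : measurableType d) (X : Omega -> R) t :
  measurable_fun setT X -> measurable_fun setT (fun w => Yf t (X w)).
Proof.
move=> mX; rewrite /Yf.
apply: (@measurable_maxr _ _ _ _ (fun w => `|X w| - t) (fun=> 0)).
  apply: measurable_funB; last exact: measurable_cst.
  exact: measurableT_comp (@normr_measurable R setT) mX.
exact: measurable_cst.
Qed.

Lemma EY_bound d (Omega : measurableType d) (P : probability Omega R)
  (X : Omega -> R) (b t : R) : 0 < b -> 0 < t -> is_laplace P X b ->
  (\int[P]_w (Yf t (X w))%:E <= (b * expR (- t / b))%:E)%E.
Proof.
move=> b0 t0 hX; have [mX _] := hX.
have mY : (fun w => Yf t (X w)) \in mfun by rewrite inE; exact: Yf_meas.
pose Y : {RV P >-> R} := mfun_Sub mY.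
have YE : forall w, Y w = Yf t (X w) by move=> w; rewrite /Y mfun_valP.
have -> : (\int[P]_w (Yf t (X w))%:E = 'E_P[Y])%E.
  by rewrite expectation_def; apply: eq_integral => w _; rewrite YE.
rewrite ge0_expectation_ccdf; last by move=> w; rewrite YE Yf_ge0.
have cE : (b * expR (- t / b) >= 0) by rewrite mulr_ge0 ?expR_ge0 // ltW.
have -> : (\int[mu]_(r in `[0%R, +oo[) ccdf Y r =
   \int[mu]_(r in `[0%R, +oo[) ((b * expR (- t / b))%:E * (exponential_pdf b^-1 r)%:E))%E.
  apply: eq_integral => r; rewrite inE /= in_itv /= andbT => r0.
  rewrite /ccdf /distribution /pushforward.
  have -> : Y @^-1` `]r, +oo[ = [set w | t + r < `|X w|].
    apply/seteqP; split => w /=; rewrite in_itv /= andbT /Yf.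
      rewrite lt_max (ltNge r 0) r0 orbF => h; lra.
    move=> h; rewrite lt_max; apply/orP; left; lra.
  rewrite (@laplace_tail R _ _ P X b (t + r) b0 _ hX); last lra.
  rewrite -EFinM exponential_pdfE //; congr EFin.
  rewrite mulrA -[b * _ * _]mulrA [expR _ * _]mulrC mulrA mulfV ?gt_eqF // mul1r -expRD.
  by congr expR; ring.
have mE : measurable_fun (`[0%R, +oo[%classic : set R) (fun x => (exponential_pdf b^-1 x)%:E).
  apply/measurable_EFinP; apply: measurable_funTS.
  exact: measurable_exponential_pdf.
rewrite ge0_integralZl //; last first.
  by move=> x _; rewrite lee_fin exponential_pdf_ge0 // invr_ge0 ltW.
rewrite -[leRHS]mule1; apply: lee_wpmul2l; first by rewrite lee_fin.
rewrite -(integral_exponential_pdf (rate:=b^-1)); last by rewrite invr_gt0.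
apply: ge0_subset_integral => //.
- apply/measurable_EFinP; exact: measurable_exponential_pdf.
- by move=> x _; rewrite lee_fin exponential_pdf_ge0 // invr_ge0 ltW.
Qed.
End Ex.
Section PH.
Variable R : realType.
Variables (d : measure_display) (Omega : measurableType d) (P : probability Omega R).

Lemma msum (I : eqType) (r : seq I) (f : I -> Omega -> R) :
  (forall j, j \in r -> measurable_fun setT (f j)) ->
  measurable_fun setT (fun w => \sum_(j <- r) f j w).
Proof.
elim: r => [|a r IH] h.
  rewrite (_ : (fun w => \sum_(j <- [::]) f j w) = cst 0); first exact: measurable_cst.
  by apply/funext => w; rewrite big_nil.
rewrite (_ : (fun w => \sum_(j <- a :: r) f j w) = f a \+ (fun w => \sum_(j <- r) f j w)); last first.
  by apply/funext => w; rewrite big_cons.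
apply: measurable_funD; first by apply: h; rewrite mem_head.
by apply: IH => j jr; apply: h; rewrite in_cons jr orbT.
Qed.

Lemma isum (I : eqType) (r : seq I) (f : I -> Omega -> R) :
  (forall j, j \in r -> measurable_fun setT (f j)) ->
  (forall j w, j \in r -> 0 <= f j w) ->
  (\int[P]_w (\sum_(j <- r) f j w)%:E = \sum_(j <- r) \int[P]_w (f j w)%:E)%E.
Proof.
elim: r => [|a r IH] hm hp.
  by rewrite big_nil; under eq_integral => w _ do rewrite big_nil; exact: integral0.
rewrite big_cons; under eq_integral => w _ do rewrite big_cons EFinD.
have hm' : forall j, j \in r -> measurable_fun setT (f j).
  by move=> j jr; apply: hm; rewrite in_cons jr orbT.
have hp' : forall j w, j \in r -> 0 <= f j w.
  by move=> j w jr; apply: hp; rewrite in_cons jr orbT.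
have p1 : forall w, [set: Omega] w -> (0 <= (f a w)%:E)%E.
  by move=> w _; rewrite lee_fin hp // mem_head.
have m1 : measurable_fun setT (fun w => (f a w)%:E).
  by apply/measurable_EFinP; apply: hm; rewrite mem_head.
have p2 : forall w, [set: Omega] w -> (0 <= (\sum_(j <- r) f j w)%:E)%E.
  by move=> w _; rewrite lee_fin big_seq; apply: sumr_ge0 => j jr; apply: hp'.
have m2 : measurable_fun setT (fun w => (\sum_(j <- r) f j w)%:E).
  by apply/measurable_EFinP; exact: msum.
by rewrite (ge0_integralD _ _ p1 m1 p2 m2) // IH.
Qed.

Lemma measure_bigU_le (I : Type) (r : seq I) (F : I -> set Omega) :
  (forall j, measurable (F j)) ->
  (P (\big[setU/set0]_(j <- r) F j) <= \sum_(j <- r) P (F j))%E.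
Proof.
move=> mF; elim: r => [|a r IH].
  by rewrite !big_nil measure0.
rewrite !big_cons; apply: le_trans (measureU2 _ _ _) _ => //.
  exact: bigsetU_measurable.
exact: leeD.
Qed.

Lemma in_bigsetU (I : Type) (r : seq I) (F : I -> set Omega) w :
  (\big[setU/set0]_(j <- r) F j) w -> exists j, F j w.
Proof.
elim: r => [|a r IH]; first by rewrite big_nil.
by rewrite big_cons => -[h|h]; [exists a|exact: IH].
Qed.

End PH.
Lemma tail_meas (R : realType) d (Omega : measurableType d) (X : Omega -> R) a :
  measurable_fun setT X -> measurable [set w | a < `|X w|].
Proof.
move=> mX.
have -> : [set w | a < `|X w|] = ~` (X @^-1` `[(- a)%R, a]).
  apply/seteqP; split => w /=; rewrite in_itv /=.
    by move=> h /andP[h1 h2]; move: h; rewrite ltNge ler_norml h1 h2.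
  by move=> h; rewrite ltNge ler_norml; apply/negP.
apply: measurableC; rewrite -(setTI (X @^-1` _)); exact: mX.
Qed.
Lemma energy_ge0 (R : realType) n k (c : 'I_n -> 'I_n -> R) (x : 'I_n -> 'I_k -> R) :
  cost_fun c -> 0 <= energy c x.
Proof.
move=> [_ c0]; apply: sumr_ge0 => u _; apply: sumr_ge0 => v _.
by apply: mulr_ge0 => //; apply: sumr_ge0 => j _.
Qed.

Lemma in_bigsetU2 (R : realType) d (Omega : measurableType d) (I : eqType) (r : seq I)
  (F : I -> set Omega) w j : j \in r -> F j w -> (\big[setU/set0]_(j <- r) F j) w.
Proof.
elim: r => [|a r IH] //; rewrite in_cons big_cons => /orP[/eqP ->|jr] h.
  by left.
by right; exact: IH.
Qed.

Theorem theorem4p6 (R : realType) :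
  exists C1 C2 : R, 0 < C1 /\ 0 < C2 /\
  forall (eps : R) (n k : nat) (s : 'I_k -> 'I_n) (c : 'I_n -> 'I_n -> R)
    (d : measure_display) (Omega : measurableType d) (P : probability Omega R)
    (Z : 'I_k -> 'I_n -> Omega -> R)
    (sel : Omega -> 'I_n -> 'I_k -> R),
    0 < eps -> (2 <= k)%N -> (k <= n)%N ->
    injective s -> cost_fun c ->
    (* the Z_{s_i,u}, u outside T, are independent Lap(sqrt 2 * k / eps) *)
    mutually_independent
      (fun p : 'I_k * 'I_n => p.2 \notin codom s) P (fun p => Z p.1 p.2) ->
    (forall i u, u \notin codom s ->
       is_laplace P (Z i u) (Num.sqrt 2 * k%:R / eps)) ->
    (* the mechanism returns an optimal solution of the noisy program *)
    (forall w, is_noisy_opt c s (fun i u => Z i u w) (sel w)) ->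
    measurable_fun setT (fun w => energy c (sel w)) ->
    ((\int[P]_w (energy c (sel w))%:E - (OPT c s)%:E
        <= (C1 * (n%:R * k%:R * ln k%:R) / eps)%:E)%E /\
     (P [set w | (energy c (sel w) - OPT c s
                   > C2 * (n%:R * k%:R * ln (n%:R * k%:R)) / eps)%R]
        <= ((n * k)%:R^-1)%:E)%E).
Proof.
have ln2 : 0 < ln (2 : R) by apply: ln_gt0; rewrite ltr1n.
have sq2 : 0 < Num.sqrt (2 : R) by rewrite sqrtr_gt0.
exists (4 * Num.sqrt 2 * (1 + (ln 2)^-1)), (8 * Num.sqrt 2).
split; first by rewrite !mulr_gt0 // ltr_wpDr // ltW // invr_gt0.
split; first by rewrite mulr_gt0.
move=> eps n k s c d Omega P Z sel eps0 k2 kn sinj cf _ lap opt menergy.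
set b := Num.sqrt 2 * k%:R / eps.
have k1 : 1 < k%:R :> R by rewrite ltr1n.
have k0 : 0 < k%:R :> R by lra.
have b0 : 0 < b by rewrite /b !mulr_gt0 // invr_gt0.
have mZ : forall i u, u \notin codom s -> measurable_fun setT (Z i u).
  by move=> i u h; have [] := lap i u h.
have dev : forall t w, 0 <= t -> energy c (sel w) - OPT c s <=
    4 * (n%:R * t + \sum_(u < n | u \notin codom s) \sum_i Yf t (Z i u w)).
  by move=> t w t0; exact: (@dev_bound R n k c s (fun i u => Z i u w) (sel w) t (opt w) t0).
have [w0 _] : exists w0 : Omega, True.
  apply: contrapT => hno.
  have hT : [set: Omega] = set0.
    by apply/seteqP; split => w // _; apply: hno; exists w.
  have := probability_setT P; rewrite hT measure0 => -[] /eqP.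
  by rewrite eq_sym oner_eq0.
have OPT0 : 0 <= OPT c s.
  apply: lb_le_inf; first by exists (energy c (sel w0)); exists (sel w0) => //; exact: (opt w0).1.
  by move=> e [y _ <-]; exact: energy_ge0.
split.
  have lk0 : 0 < ln (k%:R : R) by apply: ln_gt0.
  set t := b * ln (k%:R : R).
  have t0 : 0 < t by rewrite /t mulr_gt0.
  set fl := [seq u <- index_enum 'I_n | u \notin codom s].
  pose G u w := \sum_(i <- index_enum 'I_k) 4 * Yf t (Z i u w).
  have flP : forall u, u \in fl -> u \notin codom s by move=> u; rewrite mem_filter => /andP[].
  have mY4 : forall u i, u \in fl -> measurable_fun setT (fun w => 4 * Yf t (Z i u w)).
    move=> u i hu; apply: (@measurable_funM _ _ _ _ (fun=> 4) (fun w => Yf t (Z i u w))).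
      exact: measurable_cst.
    by apply: Yf_meas; apply: mZ; exact: flP.
  have mG : forall u, u \in fl -> measurable_fun setT (G u).
    by move=> u hu; apply: msum => i _; exact: mY4.
  have pG : forall u w, u \in fl -> 0 <= G u w.
    by move=> u w _; apply: sumr_ge0 => i _; rewrite mulr_ge0 // Yf_ge0.
  set K := OPT c s + 4 * (n%:R * t).
  have K0 : 0 <= K.
    by rewrite /K; apply: addr_ge0 => //; apply: mulr_ge0 => //; apply: mulr_ge0 => //; exact: ltW.
  have bound : forall w, energy c (sel w) <= K + \sum_(u <- fl) G u w.
    move=> w; have := dev t w (ltW t0).
    have -> : \sum_(u <- fl) G u w =
        4 * \sum_(u < n | u \notin codom s) \sum_i Yf t (Z i u w).
      rewrite big_filter mulr_sumr; apply: eq_bigr => u _; rewrite /G mulr_sumr.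
      by [].
    rewrite /K; lra.
  have mS : measurable_fun setT (fun w => \sum_(u <- fl) G u w) by exact: msum.
  have eY : expR (- t / b) = (k%:R)^-1.
    have -> : - t / b = - ln (k%:R : R) by rewrite /t; field; rewrite gt_eqF.
    by rewrite expRN lnK // posrE.
  have IG : forall u, u \in fl -> (\int[P]_w (G u w)%:E <= (4 * b)%:E)%E.
    move=> u hu; rewrite isum //; last first.
      by move=> i w _; rewrite mulr_ge0 // Yf_ge0.
      by move=> i _; exact: mY4.
    apply: (@le_trans _ _ (\sum_(i <- index_enum 'I_k) (4 * (b * (k%:R)^-1))%:E)%E).
      apply: lee_sum => i _.
      have -> : (\int[P]_w (4 * Yf t (Z i u w))%:E =
                 \int[P]_w ((4:R)%:E * (Yf t (Z i u w))%:E))%E.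
        by apply: eq_integral => w _; rewrite EFinM.
      have mYi : measurable_fun setT (fun w => (Yf t (Z i u w))%:E).
        by apply/measurable_EFinP; apply: Yf_meas; apply: mZ; exact: flP.
      have pYi : forall w, [set: Omega] w -> (0 <= (Yf t (Z i u w))%:E)%E.
        by move=> w _; rewrite lee_fin Yf_ge0.
      rewrite (ge0_integralZl P measurableT mYi pYi) //.
      rewrite EFinM lee_pmul2l ?lte_fin //.
      by rewrite -eY; apply: EY_bound => //; apply: lap; exact: flP.
    rewrite sumEFin.
    have -> : \sum_(i <- index_enum 'I_k) (4 * (b * (k%:R)^-1)) = 4 * b.
      rewrite sumr_const card_ord -[_ *+ k]mulr_natr -!mulrA mulVf ?mulr1 //; last by rewrite gt_eqF.
      rewrite /b; ring.
    by [].
  have hs : \sum_(u <- fl) 4 * b <= n%:R * (4 * b).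
    rewrite big_filter.
    apply: (@le_trans _ _ (\sum_(u < n) 4 * b)); last first.
      by rewrite sumr_const card_ord -[_ *+ n]mulr_natl.
    rewrite [leRHS](bigID (fun u => u \notin codom s)) /= lerDl.
    by apply: sumr_ge0 => u _; rewrite mulr_ge0 // ltW.
  have hl : 1 <= ln (k%:R : R) / ln 2.
    by rewrite ler_pdivlMr // mul1r ler_ln ?posrE // ler_nat.
  set C1 := 4 * Num.sqrt 2 * (1 + (ln 2)^-1).
  have hC : 4 * (n%:R * t) + n%:R * (4 * b) <= C1 * (n%:R * k%:R * ln k%:R) / eps.
    have e1 : 4 * (n%:R * t) + n%:R * (4 * b) = (4 * n%:R * b) * (ln k%:R + 1).
      by rewrite /t; ring.
    have e2 : C1 * (n%:R * k%:R * ln k%:R) / eps =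
              (4 * n%:R * b) * (ln k%:R + ln k%:R / ln 2).
      rewrite /C1 /b; field; rewrite ?gt_eqF //.
    rewrite e1 e2; apply: ler_wpM2l.
      by apply: mulr_ge0; [apply: mulr_ge0 | exact: ltW].
    by rewrite lerD2l.
  rewrite lee_subel_addr //.
  apply: (@le_trans _ _ (\int[P]_w (K + \sum_(u <- fl) G u w)%:E)%E).
    apply: ge0_le_integral => //.
    - by move=> w _; rewrite lee_fin; exact: energy_ge0.
    - exact/measurable_EFinP.
    - apply/measurable_EFinP; apply: (@measurable_funD _ _ _ _ (fun=> K)).
        exact: measurable_cst.
      exact: mS.
    - by move=> w _; rewrite lee_fin bound.
  have p1 : forall w, [set: Omega] w -> (0 <= (cst K%:E w))%E.
    by move=> w _; rewrite /= lee_fin.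
  have m1 : measurable_fun setT (cst K%:E : Omega -> \bar R) by exact: measurable_cst.
  have p2 : forall w, [set: Omega] w -> (0 <= (\sum_(u <- fl) G u w)%:E)%E.
    by move=> w _; rewrite lee_fin big_seq; apply: sumr_ge0 => u hu; exact: pG.
  have m2 : measurable_fun setT (fun w => (\sum_(u <- fl) G u w)%:E).
    exact/measurable_EFinP.
  have -> : (\int[P]_w (K + \sum_(u <- fl) G u w)%:E =
     \int[P]_w (cst K%:E w + (\sum_(u <- fl) G u w)%:E))%E.
    by apply: eq_integral => w _; rewrite EFinD.
  rewrite (ge0_integralD P measurableT p1 m1 p2 m2) integral_cst //.
  rewrite [X in (K%:E * X)%E](_ : _ = 1%E); last exact: probability_setT.
  rewrite mule1 isum //.
  apply: (@le_trans _ _ (K%:E + \sum_(u <- fl) (4 * b)%:E)%E).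
    rewrite leeD2l // big_seq [leRHS]big_seq.
    by apply: lee_sum => u hu; exact: IG.
  rewrite sumEFin -EFinD -EFinD lee_fin /K; lra.
set N := n%:R * k%:R : R.
have n1 : 1 < n%:R :> R by rewrite ltr1n; apply: leq_trans kn.
have N1 : 1 < N by rewrite /N; nra.
have N0 : 0 < N by lra.
set L := ln N.
have L0 : 0 < L by apply: ln_gt0.
set t2 := 2 * b * L.
have t20 : 0 < t2 by rewrite /t2; apply: mulr_gt0 => //; apply: mulr_gt0.
pose F := fun p : 'I_k * 'I_n =>
  if p.2 \notin codom s then [set w | t2 < `|Z p.1 p.2 w|] else set0.
have mF : forall p, measurable (F p).
  by move=> p; rewrite /F; case: ifP => h //; apply: tail_meas; exact: mZ.
set q := (N * N)^-1.
have eq_q : expR (- t2 / b) = q.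
  have -> : - t2 / b = - (L + L).
    by rewrite /t2; field; rewrite gt_eqF.
  by rewrite expRN expRD lnK // posrE.
have PF : forall p, (P (F p) <= q%:E)%E.
  move=> p; rewrite /F; case: ifP => h.
    by rewrite (@laplace_tail R _ _ P (Z p.1 p.2) b t2 b0 t20 (lap _ _ h)) eq_q.
  by rewrite measure0 lee_fin /q invr_ge0; nra.
set K := 8 * Num.sqrt 2 * (n%:R * k%:R * ln (n%:R * k%:R)) / eps.
have mE : measurable [set w | energy c (sel w) - OPT c s > K].
  have := menergy measurableT (`](OPT c s + K)%R, +oo[%classic) (measurable_itv _).
  rewrite setTI; congr measurable; apply/seteqP; split => w /=; rewrite in_itv /= andbT; lra.
have sub : [set w | energy c (sel w) - OPT c s > K] `<=`
           \big[setU/set0]_(p <- index_enum ('I_k * 'I_n)%type) F p.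
  move=> w /= hw.
  have [[p hp]|hno] := pselect (exists p, F p w).
    by apply: (@in_bigsetU2 R _ _ _ _ _ w p) => //; exact: mem_index_enum.
  have := dev t2 w (ltW t20).
  rewrite big1; last first.
    move=> u hu; apply: big1 => i _; rewrite /Yf; apply/max_idPr.
    rewrite subr_le0 leNgt; apply/negP => hlt; apply: hno; exists (i, u).
    by rewrite /F /= hu.
  have -> : 4 * (n%:R * t2 + 0) = K.
    by rewrite /K /t2 /b /L /N; field; rewrite ?gt_eqF.
  lra.
have mU : measurable (\big[setU/set0]_(p <- index_enum ('I_k * 'I_n)%type) F p).
  by apply: bigsetU_measurable => p _; exact: mF.
apply: le_trans (le_measure P _ _ sub) _; rewrite ?inE //.
apply: le_trans (@measure_bigU_le R d Omega P _ _ F mF) _.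
apply: (@le_trans _ _ (\sum_(p <- index_enum ('I_k * 'I_n)%type) q%:E)%E); first by apply: lee_sum => p _; exact: PF.
rewrite sumEFin sumr_const card_prod !card_ord lee_fin /q natrM -/N -mulr_natl natrM.
have -> : k%:R * n%:R / (N * N) = N^-1.
  by rewrite [k%:R * _]mulrC -/N invfM mulrA mulfV ?mul1r // gt_eqF.
by [].
Qed.
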